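(* Let $\bm{G}_t\in\mathbb{R}^{n_1\times n_2}$, $\epsilon_t>0$, $\bm{L}_t=\epsilon_t\bm{I}_{n_1}+\mathrm{diag}(\bm{G}_t\bm{G}_t^T)$, $\bm{R}_t=\epsilon_t\bm{I}_{n_2}+\mathrm{diag}(\bm{G}_t^T\bm{G}_t)$, $\nu_t=\epsilon_t^{1/2}$, $\mu_t=(\epsilon_t+\|\bm{G}_t\|_\vee^2)^{1/2}$. Let $\bm{X}_t,\bm{X}\in\mathbb{R}^{n_1\times n_2}$ be rank-$r$ matrices, $\bm{X}_t=\bm{U}_t\bm{\Sigma}_t\bm{V}_t^T$ a compact SVD, and $\widetilde{\mathcal{P}}_{\mathbb{T}_t}$ the orthogonal projector, with respect to $\langle\cdot,\cdot\rangle_{\mathcal{W}_t}$, onto $\mathbb{T}_t=\{\bm{U}_t\bm{Q}^T+\bm{P}\bm{V}_t^T:\bm{P}\in\mathbb{R}^{n_1\times r},\bm{Q}\in\mathbb{R}^{n_2\times r}\}$. Assume $\mathcal{A}:\mathbb{R}^{n_1\times n_2}\to\mathbb{R}^m$ satisfies the restricted isometry property of order $3r$ with constant $\delta_{3r}$. Then $$\big\|\widetilde{\mathcal{P}}_{\mathbb{T}_t}\mathcal{W}_t^{-1}\mathcal{A}^*\mathcal{A}(\mathcal{I}-\widetilde{\mathcal{P}}_{\mathbb{T}_t})\bm{X}\big\|_{\mathcal{W}_t}\le\frac12\Big((\nu_t^{-1}-\mu_t^{-1})+(\nu_t^{-1}+\mu_t^{-1})\delta_{3r}\Big)\big\|(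\mathcal{I}-\widetilde{\mathcal{P}}_{\mathbb{T}_t})\bm{X}\big\|_{\mathcal{W}_t}.$$
   Context: Restricted isometry property of order $s$: there is $\delta_s\in(0,1)$ with $(1-\delta_s)\|\bm{Z}\|_F^2\le\|\mathcal{A}\bm{Z}\|_2^2\le(1+\delta_s)\|\bm{Z}\|_F^2$ for all $\bm{Z}$ of rank at most $s$. $\mathcal{A}\bm{Y}=(\langle\bm{A}_i,\bm{Y}\rangle)_{i=1}^m$, $\mathcal{A}^*\bm{p}=\sum_ip_i\bm{A}_i$ is its adjoint under the standard inner product $\langle\bm{A},\bm{B}\rangle=\mathrm{trace}(\bm{A}^T\bm{B})$. $\langle\bm{Z},\bm{Y}\rangle_{\mathcal{W}_t}=\langle\bm{L}_t^{1/4}\bm{Z}\bm{R}_t^{1/4},\bm{Y}\rangle$, $\|\cdot\|_{\mathcal{W}_t}$ its norm, and $\mathcal{W}_t^{-1}\bm{Z}=\bm{L}_t^{-1/4}\bm{Z}\bm{R}_t^{-1/4}$. $\mathcal{I}$ is the identity. $\|\bm{Z}\|_\vee=\max\{\max_i\|\bm{Z}(i,:)\|_2,\max_j\|\bm{Z}(:,j)\|_2\}$. *)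

(* Defs.v *)
From HB Require Import structures.
From mathcomp Require Import all_boot all_order all_algebra.
Set Implicit Arguments. Unset Strict Implicit. Unset Printing Implicit Defensive.
Import Order.TTheory GRing.Theory Num.Theory.
Local Open Scope ring_scope.

Section Defs.
Variable R : rcfType.

Definition frob_dot {n1 n2} (A B : 'M[R]_(n1, n2)) : R := \tr (A^T *m B).
Definition frob_norm {n1 n2} (A : 'M[R]_(n1, n2)) : R := Num.sqrt (frob_dot A A).

Definition Aop {m n1 n2} (A : 'I_m -> 'M[R]_(n1, n2)) (Y : 'M[R]_(n1, n2))
  : 'cV[R]_m := \col_i frob_dot (A i) Y.
Definition Aadj {m n1 n2} (A : 'I_m -> 'M[R]_(n1, n2)) (p : 'cV[R]_m)
  : 'M[R]_(n1, n2) := \sum_i p i 0 *: A i.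
Definition vnorm2 {m} (p : 'cV[R]_m) : R := Num.sqrt (\sum_i p i 0 ^+ 2).

Definition RIP {m n1 n2} (A : 'I_m -> 'M[R]_(n1, n2)) (s : nat) (delta : R) :=
  0 < delta < 1 /\
  forall Z : 'M[R]_(n1, n2), (\rank Z <= s)%N ->
    (1 - delta) * frob_norm Z ^+ 2 <= vnorm2 (Aop A Z) ^+ 2 /\
    vnorm2 (Aop A Z) ^+ 2 <= (1 + delta) * frob_norm Z ^+ 2.

Definition diagpart {n} (M : 'M[R]_n) : 'M[R]_n := diag_mx (\row_i M i i).

Definition Lmat {n1 n2} (eps : R) (G : 'M[R]_(n1, n2)) : 'M[R]_n1 :=
  eps%:M + diagpart (G *m G^T).
Definition Rmat {n1 n2} (eps : R) (G : 'M[R]_(n1, n2)) : 'M[R]_n2 :=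
  eps%:M + diagpart (G^T *m G).

Definition diag_root4 {n} (D : 'M[R]_n) : 'M[R]_n :=
  diag_mx (\row_i Num.sqrt (Num.sqrt (D i i))).

Definition Wop {n1 n2} (eps : R) (G : 'M[R]_(n1, n2)) (Z : 'M[R]_(n1, n2)) :=
  diag_root4 (Lmat eps G) *m Z *m diag_root4 (Rmat eps G).
Definition Winv {n1 n2} (eps : R) (G : 'M[R]_(n1, n2)) (Z : 'M[R]_(n1, n2)) :=
  invmx (diag_root4 (Lmat eps G)) *m Z *m invmx (diag_root4 (Rmat eps G)).

Definition Wdot {n1 n2} (eps : R) (G : 'M[R]_(n1, n2)) (Z Y : 'M[R]_(n1, n2)) :=
  frob_dot (Wop eps G Z) Y.
Definition Wnorm {n1 n2} (eps : R) (G : 'M[R]_(n1, n2)) (Z : 'M[R]_(n1, n2)) :=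
  Num.sqrt (Wdot eps G Z Z).

Definition vee_norm {n1 n2} (Z : 'M[R]_(n1, n2)) : R :=
  Num.max (\big[Num.max/0]_(i < n1) Num.sqrt (\sum_j Z i j ^+ 2))
          (\big[Num.max/0]_(j < n2) Num.sqrt (\sum_i Z i j ^+ 2)).

Definition in_tangent {n1 n2 r} (U : 'M[R]_(n1, r)) (V : 'M[R]_(n2, r))
  (Y : 'M[R]_(n1, n2)) : Prop :=
  exists (P : 'M[R]_(n1, r)) (Q : 'M[R]_(n2, r)), Y = U *m Q^T + P *m V^T.

Definition is_W_proj {n1 n2 r} (eps : R) (G : 'M[R]_(n1, n2))
  (U : 'M[R]_(n1, r)) (V : 'M[R]_(n2, r))
  (P : 'M[R]_(n1, n2) -> 'M[R]_(n1, n2)) : Prop :=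
  forall Z, in_tangent U V (P Z) /\
    forall Y, in_tangent U V Y -> Wdot eps G (Z - P Z) Y = 0.

Definition compact_svd {n1 n2 r} (X : 'M[R]_(n1, n2)) (U : 'M[R]_(n1, r))
  (S : 'M[R]_r) (V : 'M[R]_(n2, r)) : Prop :=
  [/\ U^T *m U = 1%:M, V^T *m V = 1%:M,
      (exists2 s : 'rV[R]_r, S = diag_mx s & forall i, 0 < s 0 i)
    & X = U *m S *m V^T].

End Defs.

(* Main.v *)
Require Import Defs.
From HB Require Import structures.
From mathcomp Require Import all_boot all_order all_algebra.
From mathcomp Require Import ring lra.
Import Order.TTheory GRing.Theory Num.Theory.
Local Open Scope ring_scope.

Section Aux.
Context {R : rcfType}.
Context {n1 n2 : nat}.
Implicit Types A B C Z Y : 'M[R]_(n1, n2).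

Lemma fdE A B : frob_dot A B = \sum_j \sum_i A i j * B i j.
Proof.
rewrite /frob_dot /mxtrace; apply: eq_bigr => j _; rewrite !mxE.
by apply: eq_bigr => i _; rewrite mxE.
Qed.

Lemma fdC A B : frob_dot A B = frob_dot B A.
Proof. by rewrite !fdE; apply: eq_bigr => j _; apply: eq_bigr => i _; rewrite mulrC. Qed.

Lemma fdDl A B C : frob_dot (A + B) C = frob_dot A C + frob_dot B C.
Proof.
rewrite !fdE -big_split; apply: eq_bigr => j _; rewrite -big_split.
by apply: eq_bigr => i _; rewrite mxE mulrDl.
Qed.

Lemma fdZl a A C : frob_dot (a *: A) C = a * frob_dot A C.
Proof.
rewrite !fdE mulr_sumr; apply: eq_bigr => j _; rewrite mulr_sumr.
by apply: eq_bigr => i _; rewrite mxE mulrA.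
Qed.

Lemma fdNl A C : frob_dot (- A) C = - frob_dot A C.
Proof. by rewrite -scaleN1r fdZl mulN1r. Qed.

Lemma fdDr A B C : frob_dot C (A + B) = frob_dot C A + frob_dot C B.
Proof. by rewrite fdC fdDl !(fdC C). Qed.
Lemma fdZr a A C : frob_dot C (a *: A) = a * frob_dot C A.
Proof. by rewrite fdC fdZl (fdC C). Qed.
Lemma fdNr A C : frob_dot C (- A) = - frob_dot C A.
Proof. by rewrite fdC fdNl (fdC C). Qed.
Lemma fd0l C : frob_dot 0 C = 0.
Proof. by rewrite -(scale0r 0) fdZl mul0r. Qed.

Lemma fd_sum m (p : 'I_m -> R) (F : 'I_m -> 'M[R]_(n1, n2)) Y :
  frob_dot (\sum_k p k *: F k) Y = \sum_k p k * frob_dot (F k) Y.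
Proof.
apply: (big_rec2 (fun x y => frob_dot x Y = y)); first exact: fd0l.
by move=> k x y _ <-; rewrite fdDl fdZl.
Qed.

End Aux.

Lemma le_bigmax_seq (R : rcfType) (I : eqType) (s : seq I) (F : I -> R) i :
  i \in s -> F i <= \big[Num.max/0]_(j <- s) F j.
Proof.
elim: s => //= a s IH; rewrite in_cons big_cons => /orP [/eqP -> | /IH h].
  by rewrite le_max lexx.
by rewrite le_max h orbT.
Qed.

Lemma le_bigmax_ord (R : rcfType) n (F : 'I_n -> R) i :
  F i <= \big[Num.max/0]_(j < n) F j.
Proof. by apply: le_bigmax_seq; rewrite mem_index_enum. Qed.
Arguments le_bigmax_ord {R n} F i.

Section W.
Context {R : rcfType}.
Context {n1 n2 : nat}.
Variable eps : R.
Variable G : 'M[R]_(n1, n2).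
Hypothesis eps_gt0 : 0 < eps.
Implicit Types A B C Z Y : 'M[R]_(n1, n2).

Definition lw i := Num.sqrt (Num.sqrt (Lmat eps G i i)).
Definition rw j := Num.sqrt (Num.sqrt (Rmat eps G j j)).
Definition KK := eps + vee_norm G ^+ 2.

Lemma LiiE i : Lmat eps G i i = eps + \sum_k G i k ^+ 2.
Proof.
rewrite /Lmat /diagpart !mxE eqxx !mulr1n; congr (_ + _).
by apply: eq_bigr => k _; rewrite mxE expr2.
Qed.

Lemma RjjE j : Rmat eps G j j = eps + \sum_k G k j ^+ 2.
Proof.
rewrite /Rmat /diagpart !mxE eqxx !mulr1n; congr (_ + _).
by apply: eq_bigr => k _; rewrite mxE expr2.
Qed.

Lemma vee_ge0 : 0 <= vee_norm G.
Proof.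
rewrite /vee_norm le_max; apply/orP; left.
elim/big_rec: _ => // k x _ h; by rewrite le_max h orbT.
Qed.

Lemma sq_le_vee (x : R) : 0 <= x -> Num.sqrt x <= vee_norm G -> x <= vee_norm G ^+ 2.
Proof.
move=> x0 h; rewrite -(sqr_sqrtr x0) lerXn2r // ?nnegrE ?sqrtr_ge0 //.
exact: vee_ge0.
Qed.

Lemma sum_sq_ge0 n (f : 'I_n -> R) : 0 <= \sum_k f k ^+ 2.
Proof. by apply: sumr_ge0 => k _; rewrite sqr_ge0. Qed.

Lemma Lii_bnd i : eps <= Lmat eps G i i <= KK.
Proof.
rewrite LiiE /KK lerDl sum_sq_ge0 /= lerD2l; apply: sq_le_vee; first exact: sum_sq_ge0.
rewrite /vee_norm le_max; apply/orP; left.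
have := le_bigmax_ord (fun k => Num.sqrt (\sum_j G k j ^+ 2)) i; exact.
Qed.

Lemma Rjj_bnd j : eps <= Rmat eps G j j <= KK.
Proof.
rewrite RjjE /KK lerDl sum_sq_ge0 /= lerD2l; apply: sq_le_vee; first exact: sum_sq_ge0.
rewrite /vee_norm le_max; apply/orP; right.
have := le_bigmax_ord (fun k => Num.sqrt (\sum_i G i k ^+ 2)) j; exact.
Qed.

Lemma ss_bnd (x : R) : eps <= x <= KK ->
  Num.sqrt (Num.sqrt eps) <= Num.sqrt (Num.sqrt x) <= Num.sqrt (Num.sqrt KK).
Proof.
case/andP=> h1 h2.
have x0 : 0 <= x by apply: le_trans h1; exact: ltW.
have K0 : 0 <= KK by apply: le_trans h2.
by rewrite !ler_sqrt ?sqrtr_ge0 // h1 h2.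
Qed.

Lemma lr_bnd i j : Num.sqrt eps <= lw i * rw j <= Num.sqrt KK.
Proof.
have /ss_bnd /andP[a1 a2] := Lii_bnd i.
have /ss_bnd /andP[b1 b2] := Rjj_bnd j.
have e0 : 0 <= eps by exact: ltW.
have K0 : 0 <= KK by rewrite /KK addr_ge0 // sqr_ge0.
have -> : Num.sqrt eps = Num.sqrt (Num.sqrt eps) * Num.sqrt (Num.sqrt eps).
  by rewrite -expr2 sqr_sqrtr // sqrtr_ge0.
have -> : Num.sqrt KK = Num.sqrt (Num.sqrt KK) * Num.sqrt (Num.sqrt KK).
  by rewrite -expr2 sqr_sqrtr // sqrtr_ge0.
rewrite /lw /rw; apply/andP; split; apply: ler_pM => //; try exact: sqrtr_ge0.
Qed.

Lemma WopE Z i j : Wop eps G Z i j = lw i * Z i j * rw j.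
Proof. by rewrite /Wop /diag_root4 mul_mx_diag mul_diag_mx /lw /rw /Lmat /Rmat /diagpart !mxE. Qed.


Lemma WdotE Z Y : Wdot eps G Z Y = \sum_j \sum_i (lw i * rw j) * (Z i j * Y i j).
Proof.
rewrite /Wdot fdE; apply: eq_bigr => j _; apply: eq_bigr => i _.
by rewrite WopE; ring.
Qed.

Lemma WdotC Z Y : Wdot eps G Z Y = Wdot eps G Y Z.
Proof. by rewrite !WdotE; apply: eq_bigr => j _; apply: eq_bigr => i _; rewrite (mulrC (Z i j)). Qed.

Lemma WopD Z Y : Wop eps G (Z + Y) = Wop eps G Z + Wop eps G Y.
Proof. by rewrite /Wop mulmxDr mulmxDl. Qed.
Lemma WopZ a Z : Wop eps G (a *: Z) = a *: Wop eps G Z.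
Proof. by apply/matrixP => i j; rewrite [RHS]mxE !WopE mxE; ring. Qed.
Lemma WopN Z : Wop eps G (- Z) = - Wop eps G Z.
Proof. by rewrite -scaleN1r WopZ scaleN1r. Qed.

Lemma WdotDl Z1 Z2 Y : Wdot eps G (Z1 + Z2) Y = Wdot eps G Z1 Y + Wdot eps G Z2 Y.
Proof. by rewrite /Wdot WopD fdDl. Qed.
Lemma WdotZl a Z Y : Wdot eps G (a *: Z) Y = a * Wdot eps G Z Y.
Proof. by rewrite /Wdot WopZ fdZl. Qed.
Lemma WdotNl Z Y : Wdot eps G (- Z) Y = - Wdot eps G Z Y.
Proof. by rewrite /Wdot WopN fdNl. Qed.
Lemma WdotDr Z1 Z2 Y : Wdot eps G Y (Z1 + Z2) = Wdot eps G Y Z1 + Wdot eps G Y Z2.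
Proof. by rewrite WdotC WdotDl !(WdotC _ Y). Qed.
Lemma WdotZr a Z Y : Wdot eps G Y (a *: Z) = a * Wdot eps G Y Z.
Proof. by rewrite WdotC WdotZl (WdotC _ Y). Qed.
Lemma WdotNr Z Y : Wdot eps G Y (- Z) = - Wdot eps G Y Z.
Proof. by rewrite WdotC WdotNl (WdotC _ Y). Qed.

Lemma W_equiv Z : Num.sqrt eps * frob_dot Z Z <= Wdot eps G Z Z <= Num.sqrt KK * frob_dot Z Z.
Proof.
rewrite WdotE fdE !mulr_sumr; apply/andP; split; apply: ler_sum => j _;
  rewrite mulr_sumr; apply: ler_sum => i _; have /andP[h1 h2] := lr_bnd i j;
  apply: ler_wpM2r => //; rewrite -expr2 sqr_ge0 //.
Qed.

Lemma fd_ge0 Z : 0 <= frob_dot Z Z.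
Proof. by rewrite fdE; apply: sumr_ge0 => j _; apply: sumr_ge0 => i _; rewrite -expr2 sqr_ge0. Qed.

Lemma Wdot_ge0 Z : 0 <= Wdot eps G Z Z.
Proof.
have /andP[h _] := W_equiv Z; apply: le_trans h.
by rewrite mulr_ge0 ?sqrtr_ge0 ?fd_ge0.
Qed.

Lemma root4_unit n (D : 'M[R]_n) : (forall i, eps <= D i i) -> diag_root4 D \in unitmx.
Proof.
move=> h; rewrite unitmxE det_diag unitfE; apply/prodf_neq0 => i _; rewrite mxE.
rewrite gt_eqF // !sqrtr_gt0; exact: lt_le_trans (h i).
Qed.

Lemma WopWinv N : Wop eps G (Winv eps G N) = N.
Proof.
have uL : diag_root4 (Lmat eps G) \in unitmx.
  by apply: root4_unit => i; have /andP[] := Lii_bnd i.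
have uR : diag_root4 (Rmat eps G) \in unitmx.
  by apply: root4_unit => i; have /andP[] := Rjj_bnd i.
rewrite /Wop /Winv !mulmxA mulmxV // mul1mx -mulmxA mulVmx // mulmx1 //.
Qed.

End W.

Section More.
Context {R : rcfType}.
Context {n1 n2 r : nat}.

Lemma fd_eq0 (Z : 'M[R]_(n1, n2)) : frob_dot Z Z = 0 -> Z = 0.
Proof.
rewrite fdE => h; apply/matrixP => i j; rewrite mxE.
have hj : \sum_i Z i j * Z i j = 0.
  by apply: (psumr_eq0P _ h) => // k _; apply: sumr_ge0 => l _; by rewrite -expr2 sqr_ge0.
have : Z i j * Z i j = 0.
  by apply: (psumr_eq0P _ hj) => // k _; by rewrite -expr2 sqr_ge0.
by move/eqP; rewrite mulf_eq0 orbb => /eqP.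
Qed.

Lemma tangent_comb (U : 'M[R]_(n1, r)) (V : 'M[R]_(n2, r)) T1 T2 (a t : R) :
  in_tangent U V T1 -> in_tangent U V T2 -> in_tangent U V (t *: T2 - a *: T1).
Proof.
move=> [P1 [Q1 ->]] [P2 [Q2 ->]].
exists (t *: P2 - a *: P1), (t *: Q2 - a *: Q1).
rewrite !linearB !linearZ /= mulmxDl -!scalemxAl mulNmx !scalerDr !scalerN scalerDr opprD.
by rewrite addrACA.
Qed.

Lemma tangent_rank (U : 'M[R]_(n1, r)) (V : 'M[R]_(n2, r)) T :
  in_tangent U V T -> (\rank T <= r + r)%N.
Proof.
move=> [P [Q ->]]; apply: leq_trans (mxrank_add _ _) _.
by apply: leq_add; apply: mulmx_max_rank.
Qed.

End More.

Theorem lemma3p9 (R : rcfType) (n1 n2 r m : nat)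
  (G : 'M[R]_(n1, n2)) (eps : R) (Xt X : 'M[R]_(n1, n2))
  (U : 'M[R]_(n1, r)) (S : 'M[R]_r) (V : 'M[R]_(n2, r))
  (PT : 'M[R]_(n1, n2) -> 'M[R]_(n1, n2))
  (A : 'I_m -> 'M[R]_(n1, n2)) (delta : R) :
  0 < eps ->
  \rank Xt = r -> \rank X = r ->
  compact_svd Xt U S V ->
  is_W_proj eps G U V PT ->
  RIP A (3 * r) delta ->
  let nu := Num.sqrt eps in
  let mu := Num.sqrt (eps + vee_norm G ^+ 2) in
  let D := X - PT X in
  Wnorm eps G (PT (Winv eps G (Aadj A (Aop A D))))
    <= 2^-1 * ((nu^-1 - mu^-1) + (nu^-1 + mu^-1) * delta) * Wnorm eps G D.
Proof.
move=> eps0 rkXt rkX svd proj hrip; cbv zeta.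
set nu := Num.sqrt eps. set mu := Num.sqrt (eps + _). set D := X - PT X.
case: hrip => /andP[d0 d1] rip.
set M := Winv eps G _.
set Y := PT M.
have [TY orthM] := proj M.
have [TX orthX] := proj X.
have DY : Wdot eps G D Y = 0 by exact: orthX.
set a := Wnorm eps G Y.
set b := Wnorm eps G D.
have a0 : 0 <= a by exact: sqrtr_ge0.
have b0 : 0 <= b by exact: sqrtr_ge0.
have a2 : a ^+ 2 = Wdot eps G Y Y by rewrite sqr_sqrtr // Wdot_ge0.
have b2 : b ^+ 2 = Wdot eps G D D by rewrite sqr_sqrtr // Wdot_ge0.
set s := \sum_i (Aop A D) i 0 * (Aop A Y) i 0.
have as2 : a ^+ 2 = s.
  have := orthM Y TY; rewrite WdotDl WdotNl => /eqP; rewrite subr_eq0 => /eqP h.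
  rewrite a2 -h /Wdot WopWinv // /Aadj fd_sum; apply: eq_bigr => i _.
  by rewrite !mxE.
have nu0 : 0 < nu by rewrite sqrtr_gt0.
have mu0 : 0 < mu by rewrite sqrtr_gt0 ltr_wpDr // sqr_ge0.
have numu : nu <= mu by rewrite ler_sqrt ?lerDl ?sqr_ge0 // ltW // ltr_wpDr // sqr_ge0.
have pq : mu^-1 <= nu^-1 by rewrite lef_pV2 ?posrE.
have c0 : 0 <= 2^-1 * ((nu^-1 - mu^-1) + (nu^-1 + mu^-1) * delta).
  rewrite mulr_ge0 ?invr_ge0 // addr_ge0 ?subr_ge0 // mulr_ge0 ?addr_ge0 ?invr_ge0 ?ltW //.
have [->|an0] := eqVneq a 0; first by rewrite mulr_ge0.
have apos : 0 < a by rewrite lt_def an0 a0.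
have [bz|bn0] := eqVneq b 0.
  exfalso; move: an0; rewrite -(sqrf_eq0 a) as2 /s.
  have Dz : D = 0.
    apply: fd_eq0; apply/eqP; rewrite eq_le fd_ge0 andbT.
    have /andP[h _] := W_equiv eps G eps0 D.
    rewrite -b2 bz expr0n /= in h.
    by rewrite -(pmulr_rle0 _ nu0).
  rewrite big1 ?eqxx // => i _; rewrite Dz mxE fdC fd0l mul0r //.
have bpos : 0 < b by rewrite lt_def bn0 b0.
have AZ : forall (x y : R) i, (Aop A (x *: D + y *: Y)) i 0 = x * (Aop A D) i 0 + y * (Aop A Y) i 0.
  by move=> x y i; rewrite !mxE fdDr !fdZr.
have vn : forall Z : 'M[R]_(n1, n2), vnorm2 (Aop A Z) ^+ 2 = \sum_i (Aop A Z i 0) ^+ 2.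
  by move=> Z; rewrite sqr_sqrtr // sum_sq_ge0.
have fn : forall Z : 'M[R]_(n1, n2), frob_norm Z ^+ 2 = frob_dot Z Z.
  by move=> Z; rewrite sqr_sqrtr // fd_ge0.
have rk : forall x y : R, (\rank (x *: D + y *: Y)%R <= 3 * r)%N.
  move=> x y.
  have -> : x *: D + y *: Y = x *: X + (y *: Y - x *: PT X).
    by rewrite /D scalerBr -addrA [_ + y *: Y]addrC.
  apply: leq_trans (mxrank_add _ _) _.
  rewrite !mulSn mul0n addn0; apply: leq_add.
    by apply: leq_trans (mxrank_scale _ _) _; rewrite rkX.
  exact: (tangent_rank U V _ (tangent_comb U V _ _ x y TX TY)).
have WZ : forall x y : R, Wdot eps G (x *: D + y *: Y) (x *: D + y *: Y) = x ^+ 2 * b ^+ 2 + y ^+ 2 * a ^+ 2.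
  move=> x y; rewrite WdotDl !WdotDr !WdotZl !WdotZr (WdotC _ _ Y D) DY a2 b2; ring.
have VPM : vnorm2 (Aop A (a *: D + b *: Y)) ^+ 2 - vnorm2 (Aop A (a *: D + (- b) *: Y)) ^+ 2 = 4 * a * b * s.
  rewrite !vn /s -sumrB !mulr_sumr; apply: eq_bigr => i _; rewrite !AZ; ring.
have [hp1 hp2] := rip _ (rk a b).
have [hm1 hm2] := rip _ (rk a (- b)).
have /andP[wp1 wp2] := W_equiv eps G eps0 (a *: D + b *: Y).
have /andP[wm1 wm2] := W_equiv eps G eps0 (a *: D + (- b) *: Y).
rewrite fn in hp1; rewrite fn in hp2; rewrite fn in hm1; rewrite fn in hm2.
rewrite WZ in wp1; rewrite WZ in wp2; rewrite WZ in wm1; rewrite WZ in wm2.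
rewrite -/nu -/mu in wp1 wp2 wm1 wm2.
rewrite sqrrN in wm1 wm2.
move: VPM hp1 hp2 hm1 hm2 wp1 wp2 wm1 wm2.
set Fp := frob_dot _ _. set Fm := frob_dot _ _.
set Vp := vnorm2 _ ^+ 2. set Vm := vnorm2 _ ^+ 2.
rewrite -as2 => VPM hp1 hp2 hm1 hm2 wp1 wp2 wm1 wm2.
set w := a ^+ 2 * b ^+ 2 + b ^+ 2 * a ^+ 2 in wp1 wp2 wm1 wm2.
set p := nu^-1. set q := mu^-1.
have p0 : 0 < p by rewrite invr_gt0.
have q0 : 0 < q by rewrite invr_gt0.
have hFp : Fp <= w * p by rewrite ler_pdivlMr // mulrC.
have hFm : w * q <= Fm by rewrite ler_pdivrMr // mulrC.
have k1 : Vp <= (1 + delta) * (w * p).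
  by apply: le_trans hp2 _; apply: ler_wpM2l => //; lra.
have k2 : (1 - delta) * (w * q) <= Vm.
  by apply: le_trans _ hm1; apply: ler_wpM2l => //; lra.
have key : (a ^+ 2 * b) * (4 * a) <= (a ^+ 2 * b) * (4 * (2^-1 * (p - q + (p + q) * delta) * b)).
  have -> : (a ^+ 2 * b) * (4 * a) = Vp - Vm by rewrite VPM; ring.
  apply: le_trans (lerB k1 k2) _.
  by rewrite /w le_eqVlt; apply/orP; left; apply/eqP; field.
have ab0 : 0 < a ^+ 2 * b by rewrite mulr_gt0 // exprn_gt0.
rewrite ler_pM2l // in key; lra.
Qed.
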